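(* Consider the problem with $p=0$. Let Assumption 1 hold, let $\{\mathbf x_k\}$ be generated by Algorithm MADS-PIP, and let $\mathcal K^x_\rho\subseteq\mathcal K_\rho$ be the index set of an end-path subsequence with end-path point $\bar{\mathbf x}$. Assume that $f$ is Lipschitz continuous near $\bar{\mathbf x}$, that the sequence of poll direction sets $\{\mathcal D_k\}_{k\in\mathcal K^x_\rho}$ is dense in the unit sphere, and that $\bar{\mathbf x}\in\Omega$ satisfies the SCQ. Then $f^\circ(\bar{\mathbf x};\mathbf d)\ge0$ for all $\mathbf d\in\mathcal T^H_\Omega(\bar{\mathbf x})$.
   Context: Consider the problem of minimizing $f(\mathbf x)$ over $\mathbf x\in\mathbb R^n$ subject to $g_\ell(\mathbf x)\le 0$ ($\ell=1,\dots,m$), with $f,g_\ell:\mathbb R^n\to\mathbb R\cup\{+\infty\}$ (no equality constraints, $p=0$). The index set $\{1,\dots,m\}$ is partitioned into disjoint sets $\mathcal G^{int}$ and $\mathcal G^{ext}$, fixed throughout. Define $\Omega^{int}=\{\mathbf x: g_\ell(\mathbf x)\le 0\ \forall\ell\in\mathcal G^{int}\}$, $\Omega^{ext}=\{\mathbf x: g_\ell(\mathbf x)\le0\ \forall \ell\in\mathcal G^{ext}\}$, $\Omega=\Omega^{int}\cap\Omega^{ext}$. Let $\phi^{prox}(\mathbf x)=\max_{\ell\in\mathcal G^{int}}g_\ell(\mathbf x)$; $c^{int}(\mathbf x)=-\prod_{\ell\in\mathcal G^{int}}\min\{1,-g_\ell(\mathbf x)\}$ if $g_\ell(\mathbf x)\le0$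 for all $\ell\in\mathcal G^{int}$, and $c^{int}(\mathbf x)=\phi^{prox}(\mathbf x)$ otherwise; $c^{ext}(\mathbf x)=\sum_{\ell\in\mathcal G^{ext}}(\max\{0,g_\ell(\mathbf x)\})^2$. (If $\mathcal G^{int}=\emptyset$, then $c^{int}\equiv-1$ and $[\phi^{prox}]^2$ is read as $+\infty$.) For $\rho>0$ the merit function is $z(\mathbf x;\rho)=f(\mathbf x)-\rho\log(-c^{int}(\mathbf x))+\frac1\rho c^{ext}(\mathbf x)$ if $c^{int}(\mathbf x)<0$, and $+\infty$ otherwise. Algorithm MADS-PIP: inputs $\mathbf x_0$ with $g_\ell(\mathbf x_0)<0$ for all $\ell\in\mathcal G^{int}$ and $z(\mathbf x_0;\rho_0)<+\infty$, $\rho_0>0$, $\theta_\rho\in(0,1)$, $\Delta_0>0$, $\theta_\Delta\in(0,1)\cap\mathbb Q$, $\beta>1$. For $k=0,1,2,\dots$ (the algorithm never stops): mesh $\mathcal M_k=\{\mathbf x_k+\delta_k\mathbf u:\mathbf u\in\mathbb Z^n\}$ with $\delta_k=\min\{\Delta_k,\Delta_k^2/\Delta_0\}$; frame $\mathcal F_k=\{\mathbf x\in\mathcal M_k:\|\mathbf x-\mathbf x_k\|\le\Delta_k\}$. Search: a finite (possibly empty) set $\mathcal S_k\subset\mathcal M_k$ is examined; if some $\mathbf s\in\mathcal S_k$ satisfies $z(\mathbf s;\rho_k)<z(\mathbf x_k;\rho_k)$, set $\mathbf x_{k+1}=\mathbf s$, $\Delta_{k+1}=\Delta_k/\theta_\Delta$,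 $\rho_{k+1}=\rho_k$ (successful iteration). Otherwise poll: choose a finite set $\mathcal D_k$ of nonzero directions with $\mathbf x_k+\mathbf d\in\mathcal F_k$ for all $\mathbf d\in\mathcal D_k$; if some $\mathbf d\in\mathcal D_k$ satisfies $z(\mathbf x_k+\mathbf d;\rho_k)<z(\mathbf x_k;\rho_k)$, set $\mathbf x_{k+1}=\mathbf x_k+\mathbf d$, $\Delta_{k+1}=\Delta_k/\theta_\Delta$, $\rho_{k+1}=\rho_k$ (successful). Otherwise the iteration is unsuccessful: $\mathbf x_{k+1}=\mathbf x_k$, $\Delta_{k+1}=\theta_\Delta\Delta_k$, and $\rho_{k+1}=\theta_\rho\rho_k$ if $\Delta_{k+1}\le\min\{\rho_k^\beta,[\phi^{prox}(\mathbf x_k)]^2\}$, else $\rho_{k+1}=\rho_k$. The path-following index set is $\mathcal K_\rho=\{k:\rho_{k+1}<\rho_k\}$. A point $\bar{\mathbf x}$ is an end-path point if there is an infinite $\mathcal K_\rho^{x}\subseteq\mathcal K_\rho$ with $\lim_{k\in\mathcal K_\rho^x}\mathbf x_k=\bar{\mathbf x}$; $\{\mathbf x_k\}_{k\in\mathcal K^x_\rho}$ is then an end-path subsequence. Assumption 1: for every $\alpha\in\mathbb R$ the level set $\{\mathbf x\in\mathbb R^n: f(\mathbf x)\le\alpha\}$ is bounded. Clarke generalized directional derivative: $c^\circ(\mathbf x;\mathbf d)=\limsup_{\mathbf y\to\mathbf x,\ t\searrow0}\frac{c(\mathbf y+t\mathbf d)-c(\mathbf y)}{t}$. $\mathcal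 B(\mathbf x,\epsilon)$ is the ball of radius $\epsilon$ centred at $\mathbf x$. Density: for an infinite index set $\mathcal K$, the sequence $\{\mathcal D_k\}_{k\in\mathcal K}$ is dense in the unit sphere if for every unit vector $\bar{\mathbf d}$ there exist an infinite $\mathcal K^d\subseteq\mathcal K$ and $\mathbf d_k\in\mathcal D_k$ ($k\in\mathcal K^d$) with $\lim_{k\in\mathcal K^d}\mathbf d_k/\|\mathbf d_k\|=\bar{\mathbf d}$. Hypertangent cone: $\mathbf d$ is hypertangent to $\Omega$ at $\mathbf x$ if there is $\epsilon>0$ with $\mathbf y+t\mathbf w\in\Omega$ for all $\mathbf y\in\Omega\cap\mathcal B(\mathbf x,\epsilon)$, $\mathbf w\in\mathcal B(\mathbf d,\epsilon)$, $t\in(0,\epsilon)$; $\mathcal T^H_\Omega(\mathbf x)$ is the set of such vectors. Stationarity constraint qualification (SCQ): a point $\mathbf x\in\Omega$ satisfies SCQ if (a) $c^{int}$ and $c^{ext}$ are Lipschitz continuous near $\mathbf x$; (b) $(c^{int})^\circ(\mathbf x;\mathbf d)<0$ for every $\mathbf d\in\mathcal T^H_\Omega(\mathbf x)$; (c) for every $\mathbf d\in\mathcal T^H_\Omega(\mathbf x)$ there is $\epsilon>0$ such that $(c^{ext})^\circ(\mathbf y;\mathbf d)<0$ for all $\mathbf y\in\mathcal B(\mathbf x,\epsilon)\setminus\Omega^{ext}$. *)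

(* Defs.v *)
From HB Require Import structures.
From mathcomp Require Import all_boot all_order all_algebra.
From mathcomp Require Import all_classical all_reals all_analysis.
Set Implicit Arguments. Unset Strict Implicit. Unset Printing Implicit Defensive.
Import Order.TTheory GRing.Theory Num.Theory.
Local Open Scope classical_set_scope.
Local Open Scope ring_scope.

Section MadsPip.
Variables (R : realType) (n m : nat).
Notation vec := 'rV[R]_n.

Definition enorm (x : vec) : R := Num.sqrt (\sum_(i < n) x ord0 i ^+ 2).

Definition inBall (x : vec) (e : R) (y : vec) : Prop := enorm (y - x) < e.

Definition lipschitz_near (c : vec -> \bar R) (x : vec) : Prop :=
  exists e : R, 0 < e /\ exists L : R,
    (forall y, inBall x e y -> c y \is a fin_num) /\
    (forall y w, inBall x e y -> inBall x e w ->
       `|fine (c y) - fine (c w)| <= L * enorm (y - w)).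

(* Clarke generalized directional derivative of a real-valued function:
   limsup_{y -> x, t \searrow 0} (h (y + t d) - h y) / t
   = inf_{e > 0} sup { (h(y+td)-h(y))/t : |y - x| < e, 0 < t < e }. *)
Definition clarke (h : vec -> R) (x d : vec) : \bar R :=
  ereal_inf [set ereal_sup [set r : \bar R | exists (y : vec) (t : R),
                   [/\ inBall x e y, 0 < t, t < e &
                       r = ((h (y + t *: d) - h y) / t)%:E]]
            | e in [set e : R | 0 < e]].

(* Clarke derivative of an extended-valued function (used only where it is
   finite, i.e. near points where it is Lipschitz). *)
Definition clarkeE (c : vec -> \bar R) (x d : vec) : \bar R :=
  clarke (fun y => fine (c y)) x d.

Variables (g : 'I_m -> vec -> \bar R) (Gint : {set 'I_m}).
Definition Gext : {set 'I_m} := ~: Gint.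

Definition in_Omega_int (x : vec) : Prop := forall l, l \in Gint -> (g l x <= 0)%E.
Definition in_Omega_ext (x : vec) : Prop := forall l, l \in Gext -> (g l x <= 0)%E.
Definition in_Omega (x : vec) : Prop := in_Omega_int x /\ in_Omega_ext x.

Definition phi_prox (x : vec) : \bar R := \big[maxe/-oo%E]_(l in Gint) g l x.
(* [phi^prox]^2 ; equals +oo when G^int is empty, as required *)
Definition phi_prox_sq (x : vec) : \bar R := (phi_prox x * phi_prox x)%E.

Definition c_int (x : vec) : \bar R :=
  if [forall l, (l \in Gint) ==> (g l x <= 0)%E]
  then (- \prod_(l in Gint) Num.min 1 (- fine (g l x)))%:E
  else phi_prox x.

Definition c_ext (x : vec) : \bar R :=
  (\sum_(l in Gext) (maxe 0 (g l x) * maxe 0 (g l x)))%E.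

Variable f : vec -> \bar R.

Definition merit (x : vec) (rho : R) : \bar R :=
  if (c_int x < 0)%E
  then (f x - (rho * ln (- fine (c_int x)))%:E + (rho^-1)%:E * c_ext x)%E
  else +oo%E.

Definition hypertangent (x d : vec) : Prop :=
  exists e : R, 0 < e /\
    forall (y w : vec) (t : R), in_Omega y -> inBall x e y -> inBall d e w ->
      0 < t -> t < e -> in_Omega (y + t *: w).

Definition SCQ (x : vec) : Prop :=
  [/\ lipschitz_near c_int x /\ lipschitz_near c_ext x,
      (forall d, hypertangent x d -> (clarkeE c_int x d < 0)%E) &
      (forall d, hypertangent x d -> exists e : R, 0 < e /\
         forall y, inBall x e y -> ~ in_Omega_ext y ->
           (clarkeE c_ext y d < 0)%E)].

Definition on_mesh (xk : vec) (delta : R) (s : vec) : Prop :=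
  exists u : 'rV[int]_n, s = xk + delta *: map_mx (fun z : int => z%:~R) u.

Definition MADS_PIP_run (rho0 theta_rho Delta0 theta_Delta beta : R)
  (x : nat -> vec) (Delta rho : nat -> R) (S D : nat -> seq vec) : Prop :=
  [/\
      (forall l, l \in Gint -> (g l (x 0%N) < 0)%E) /\
      (merit (x 0%N) rho0 < +oo)%E,
      0 < rho0 /\ 0 < theta_rho /\ theta_rho < 1,
      0 < Delta0 /\ 0 < theta_Delta /\ theta_Delta < 1 /\
        (exists q : rat, theta_Delta = ratr q),
      1 < beta /\ Delta 0%N = Delta0 /\ rho 0%N = rho0 &
      forall k : nat,
        let delta := Num.min (Delta k) (Delta k ^+ 2 / Delta0) in
        (forall s, s \in S k -> on_mesh (x k) delta s) /\
        if `[< exists2 s, s \in S k & (merit s (rho k) < merit (x k) (rho k))%E >]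
        then
          [/\ (exists2 s, s \in S k &
                 (merit s (rho k) < merit (x k) (rho k))%E /\ x k.+1 = s),
              Delta k.+1 = Delta k / theta_Delta & rho k.+1 = rho k]
        else
          (forall d, d \in D k ->
             [/\ d != 0, on_mesh (x k) delta (x k + d) & enorm d <= Delta k]) /\
          if `[< exists2 d, d \in D k &
                  (merit (x k + d) (rho k) < merit (x k) (rho k))%E >]
          then
            [/\ (exists2 d, d \in D k &
                   (merit (x k + d) (rho k) < merit (x k) (rho k))%E /\
                   x k.+1 = x k + d),
                Delta k.+1 = Delta k / theta_Delta & rho k.+1 = rho k]
          else
            [/\ x k.+1 = x k, Delta k.+1 = theta_Delta * Delta k &
                rho k.+1 =
                  if ((Delta k.+1)%:E <= mine ((rho k `^ beta)%:E)
                                               (phi_prox_sq (x k)))%E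
                  then theta_rho * rho k else rho k]].

End MadsPip.

Definition infinite_idx (K : set nat) : Prop :=
  forall N : nat, exists k : nat, (N <= k)%N /\ K k.

Definition lim_along (R : realType) (n : nat) (K : set nat)
  (u : nat -> 'rV[R]_n) (l : 'rV[R]_n) : Prop :=
  forall e : R, 0 < e -> exists N : nat,
    forall k : nat, (N <= k)%N -> K k -> enorm (u k - l) < e.

Definition dense_in_sphere (R : realType) (n : nat) (K : set nat)
  (D : nat -> seq 'rV[R]_n) : Prop :=
  forall dbar : 'rV[R]_n, enorm dbar = 1 ->
    exists Kd : set nat, Kd `<=` K /\ infinite_idx Kd /\
      exists dk : nat -> 'rV[R]_n, (forall k, Kd k -> dk k \in D k) /\
        lim_along Kd (fun k => (enorm (dk k))^-1 *: dk k) dbar.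

(* Main.v *)
Require Import Defs.
From HB Require Import structures.
From mathcomp Require Import all_boot all_order all_algebra.
From mathcomp Require Import all_classical all_reals all_analysis.
From mathcomp Require Import ring lra.
Import Order.TTheory GRing.Theory Num.Theory.
Local Open Scope classical_set_scope.
Local Open Scope ring_scope.
Set Implicit Arguments. Unset Strict Implicit. Unset Printing Implicit Defensive.

Section Enorm.
Variables (R : realType) (n : nat).
Notation vec := 'rV[R]_n.
Definition ssq (v : vec) := \sum_(i < n) v ord0 i ^+ 2.

Lemma ssq_ge0 (v : vec) : 0 <= ssq v.
Proof. by apply: sumr_ge0 => i _; exact: sqr_ge0. Qed.

Lemma enormE (v : vec) : enorm v = Num.sqrt (ssq v). Proof. by []. Qed.

Lemma enorm_ge0 (v : vec) : 0 <= enorm v.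
Proof. exact: sqrtr_ge0. Qed.

Lemma enormZ c (v : vec) : enorm (c *: v) = `|c| * enorm v.
Proof.
rewrite !enormE /ssq.
have -> : \sum_(i < n) (c *: v) ord0 i ^+ 2 = c ^+ 2 * \sum_(i < n) v ord0 i ^+ 2.
  rewrite mulr_sumr; apply: eq_bigr => i _; rewrite mxE exprMn //.
by rewrite sqrtrM ?sqr_ge0 // sqrtr_sqr.
Qed.

Lemma enormN (v : vec) : enorm (- v) = enorm v.
Proof. by rewrite -scaleN1r enormZ normrN normr1 mul1r. Qed.

Lemma enormB (u v : vec) : enorm (u - v) = enorm (v - u).
Proof. by rewrite -enormN opprB. Qed.

Lemma coord_le (v : vec) i : `|v ord0 i| <= enorm v.
Proof.
rewrite enormE -sqrtr_sqr ler_sqrt ?ssq_ge0 // /ssq (bigD1 i) //=.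
by rewrite lerDl; apply: sumr_ge0 => j _; exact: sqr_ge0.
Qed.

Lemma enorm_eq0 (v : vec) : enorm v = 0 -> v = 0.
Proof.
move=> /eqP; rewrite sqrtr_eq0 => h.
have h0 : ssq v = 0 by apply/eqP; rewrite eq_le h ssq_ge0.
apply/rowP => i; rewrite mxE.
move: h0; rewrite /ssq => /psumr_eq0P h1.
have := h1 (fun j _ => sqr_ge0 _) i isT.
by move/eqP; rewrite expf_eq0 /= => /eqP.
Qed.

Lemma cauchy_schwarz (a b : vec) :
  \sum_(i < n) a ord0 i * b ord0 i <= enorm a * enorm b.
Proof.
set S := \sum_(i < n) a ord0 i * b ord0 i.
have quad : forall t : R, 0 <= ssq a + 2 * t * S + t ^+ 2 * ssq b.
  move=> t; rewrite /ssq /S mulr_sumr mulr_sumr -!big_split /=.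
  apply: sumr_ge0 => i _.
  have -> : a ord0 i ^+ 2 + 2 * t * (a ord0 i * b ord0 i) + t ^+ 2 * b ord0 i ^+ 2
     = (a ord0 i + t * b ord0 i) ^+ 2 by ring.
  exact: sqr_ge0.
have key : S ^+ 2 <= ssq a * ssq b.
  have [hb|hb] := eqVneq (ssq b) 0.
    have b0 : b = 0 by apply: enorm_eq0; rewrite enormE hb sqrtr0.
    rewrite /S b0 big1; first by rewrite expr0n /= mulr_ge0 ?ssq_ge0.
    by move=> i _; rewrite mxE mulr0.
  have hbp : 0 < ssq b by rewrite lt_neqAle eq_sym hb ssq_ge0.
  have := quad (- S / ssq b).
  have -> : ssq a + 2 * (- S / ssq b) * S + (- S / ssq b) ^+ 2 * ssq b
     = ssq a - S ^+ 2 / ssq b by field; rewrite gt_eqF.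
  rewrite subr_ge0 ler_pdivrMr //.
by rewrite !enormE -sqrtrM ?ssq_ge0 // (le_trans (ler_norm S)) // -sqrtr_sqr ler_sqrt // mulr_ge0 ?ssq_ge0.
Qed.

Lemma enormD (u v : vec) : enorm (u + v) <= enorm u + enorm v.
Proof.
rewrite enormE -(ger0_norm (addr_ge0 (enorm_ge0 u) (enorm_ge0 v))) -sqrtr_sqr.
rewrite ler_sqrt ?sqr_ge0 // sqrrD.
have hu : enorm u ^+ 2 = ssq u by rewrite enormE sqr_sqrtr ?ssq_ge0.
have hv : enorm v ^+ 2 = ssq v by rewrite enormE sqr_sqrtr ?ssq_ge0.
rewrite hu hv.
have -> : ssq (u + v) = ssq u + 2 * \sum_(i < n) u ord0 i * v ord0 i + ssq v.
  rewrite /ssq mulr_sumr -!big_split /=; apply: eq_bigr => i _; rewrite mxE; ring.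
have := cauchy_schwarz u v; lra.
Qed.

Lemma enorm_delta (i : 'I_n) : enorm (delta_mx ord0 i : vec) = 1.
Proof.
rewrite enormE /ssq (bigD1 i) //= big1 ?addr0.
  by rewrite mxE !eqxx /= expr1n sqrtr1.
by move=> j hj; rewrite mxE eqxx /= (negbTE hj) /= expr0n.
Qed.

End Enorm.

Section OneD.
Variable R : realType.

Lemma exists_small (a b : R) : 0 < a -> 0 < b -> exists t, [/\ 0 < t, t < a & t <= b].
Proof.
move=> ha hb; exists (Num.min (a / 2) b); split.
- by rewrite lt_min hb divr_gt0.
- by rewrite gt_min; apply/orP; left; lra.
- by rewrite ge_min lexx orbT.
Qed.

Lemma segment_nonincr (phi : R -> R) (s1 K : R) :
  0 < s1 -> 0 < K -> 0 <= phi 0 ->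
  (forall a b, 0 <= a <= s1 -> 0 <= b <= s1 -> `|phi a - phi b| <= K * `|a - b|) ->
  (forall tau, 0 <= tau < s1 -> 0 < phi tau ->
     exists2 eta, 0 < eta & forall t, 0 < t < eta -> phi (tau + t) <= phi tau) ->
  phi s1 <= phi 0.
Proof.
move=> hs1 hK h0 hL hD; rewrite leNgt; apply/negP => hlt.
pose lev := (phi 0 + phi s1) / 2.
have hlev0 : 0 < lev by rewrite /lev; lra.
have hlev1 : phi 0 < lev by rewrite /lev; lra.
have hlev2 : lev < phi s1 by rewrite /lev; lra.
pose A := [set t : R | (0 <= t <= s1) /\ phi t <= lev].
have A0 : A 0 by split; [rewrite lexx /=; lra | lra].
have ubA : ubound A s1 by move=> t [/andP[_ ->]].
have hA : has_sup A by split; [exists 0 | exists s1].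
pose sg := sup A.
have sg0 : 0 <= sg by exact: sup_upper_bound hA _ A0.
have sg1 : sg <= s1 by apply: ge_sup => //; exists 0.
have rng : forall t, 0 <= t <= s1 -> (0 <= t <= s1) by [].
have phisg : phi sg <= lev.
  rewrite leNgt; apply/negP => hgt.
  have he : 0 < (phi sg - lev) / K by apply: divr_gt0 => //; lra.
  have [t At ht] := sup_adherent he hA.
  case: (At) => /andP[t0 t1] Pt.
  have tle : t <= sg by exact: sup_upper_bound hA _ At.
  have := hL sg t (ltac:(by rewrite sg0 sg1) : 0 <= sg <= s1) (ltac:(by rewrite t0 t1) : 0 <= t <= s1).
  rewrite (ger0_norm (_ : 0 <= sg - t)) ?subr_ge0 //.
  rewrite ler_norml => /andP[_ h3].
  have h4 : sg - t < (phi sg - lev) / K by rewrite /sg; lra.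
  have hKe : K * ((phi sg - lev) / K) = phi sg - lev by rewrite mulrC divfK // gt_eqF.
  have := h4; rewrite -(ltr_pM2l hK) hKe => h5.
  lra.
have sglt : sg < s1.
  rewrite lt_neqAle sg1 andbT; apply/eqP => e; move: phisg; rewrite e; lra.
have [t [ht0 hts As]] : exists t, [/\ 0 < t, sg + t <= s1 & A (sg + t)].
  have hs : 0 < s1 - sg by lra.
  have [hp|hn] := ltP 0 (phi sg).
    have [eta heta hd] := hD sg (ltac:(by rewrite sg0 sglt) : 0 <= sg < s1) hp.
    have [t [t0 t1 t2]] := exists_small heta hs.
    exists t; split => //; first lra.
    split; first by apply/andP; split; lra.
    have := hd t (ltac:(by rewrite t0 t1) : 0 < t < eta); lra.
  have he : 0 < (lev - phi sg) / K by apply: divr_gt0 => //; lra.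
  have [t [t0 t1 t2]] := exists_small he hs.
  exists t; split => //; first lra.
  split; first by apply/andP; split; lra.
  have := hL (sg + t) sg (ltac:(apply/andP; split; lra) : 0 <= sg + t <= s1) (ltac:(by rewrite sg0 sg1) : 0 <= sg <= s1).
  rewrite addrAC subrr add0r (gtr0_norm t0) ler_norml => /andP[_ h].
  have hKe : K * ((lev - phi sg) / K) = lev - phi sg by rewrite mulrC divfK // gt_eqF.
  have := t1; rewrite -(ltr_pM2l hK) hKe => h5.
  lra.
have := sup_upper_bound hA As; rewrite -/sg; lra.
Qed.

End OneD.

Section Conic.
Variables (R : realType) (n : nat).
Notation vec := 'rV[R]_n.

Definition decr_at (h : vec -> R) (y u : vec) : Prop :=
  exists2 e : R, 0 < e & forall y' t, inBall y e y' -> 0 < t < e -> h (y' + t *: u) < h y'.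

Lemma decr_step (h : vec -> R) (y u : vec) (e : R) (y' : vec) (c : R) : (forall y' t, inBall y e y' -> 0 < t < e -> h (y' + t *: u) < h y') ->
  inBall y e y' -> 0 <= c < e -> h (y' + c *: u) <= h y'.
Proof.
move=> hd hb /andP[c0 ce]; have [->|cn] := eqVneq c 0; first by rewrite scale0r addr0.
apply: ltW; apply: hd => //; rewrite ce andbT lt_neqAle eq_sym cn c0 //.
Qed.

Lemma conic (h : vec -> R) (y : vec) (I : Type) (r : seq I) (a b : I -> R) (p q : I -> vec) :
  (forall i, 0 <= a i) -> (forall i, 0 <= b i) ->
  (forall i, decr_at h y (p i)) -> (forall i, decr_at h y (q i)) ->
  exists2 eta, 0 < eta & forall t, 0 < t < eta ->
    h (y + t *: \sum_(i <- r) (a i *: p i + b i *: q i)) <= h y.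
Proof.
move=> ha hb hp hq; elim: r => [|i r [eta heta IH]].
  by exists 1 => // t _; rewrite big_nil scaler0 addr0.
have [ep hep dp] := hp i; have [eq heq dq] := hq i.
set S := \sum_(j <- r) (a j *: p j + b j *: q j).
pose M := enorm S + a i * enorm (p i) + a i + b i + 1.
have hM : 0 < M.
  by rewrite /M; have := enorm_ge0 S; have := enorm_ge0 (p i); have := ha i; have := hb i; nra.
pose m := Num.min ep eq.
have hm : 0 < m by rewrite lt_min hep heq.
have hmM : 0 < m / M by exact: divr_gt0.
exists (Num.min eta (m / M)); first by rewrite lt_min heta hmM.
move=> t /andP[t0]; rewrite lt_min => /andP[t1 t2].
have tM : t * M < m by rewrite -ltr_pdivlMr.
have mp : m <= ep by rewrite ge_min lexx.
have mq : m <= eq by rewrite ge_min lexx orbT.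
have nS := enorm_ge0 S; have np := enorm_ge0 (p i); have hai := ha i; have hbi := hb i.
have hanp : 0 <= a i * enorm (p i) by exact: mulr_ge0.
have f1 : t * a i < t * M by rewrite ltr_pM2l // /M; lra.
have f2 : t * b i < t * M by rewrite ltr_pM2l // /M; lra.
have f3 : t * enorm S + t * a i * enorm (p i) < t * M.
  by rewrite -mulrA -mulrDr ltr_pM2l // /M; lra.
have f4 : t * enorm S < t * M.
  by rewrite ltr_pM2l // /M; lra.
rewrite big_cons.
have -> : y + t *: (a i *: p i + b i *: q i + S) = ((y + t *: S) + (t * a i) *: p i) + (t * b i) *: q i.
  rewrite !scalerDr !scalerA.
  by move: (t *: S) ((t * a i) *: p i) ((t * b i) *: q i) => T P Q; rewrite [P + Q + T]addrC !addrA.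
have e1 : enorm (y + t *: S - y) = t * enorm S.
  by rewrite addrAC subrr add0r enormZ ger0_norm // ltW.
apply: le_trans (IH t (ltac:(by rewrite t0 t1))).
apply: le_trans (@decr_step h y (p i) ep (y + t *: S) (t * a i) dp _ _); last first.
- apply/andP; split; first by apply: mulr_ge0 => //; exact: ltW.
  lra.
- rewrite /inBall e1; lra.
apply: (@decr_step h y (q i) eq (y + t *: S + (t * a i) *: p i) (t * b i) dq _ _); last first.
- apply/andP; split; first by apply: mulr_ge0 => //; exact: ltW.
  lra.
rewrite /inBall.
have -> : y + t *: S + (t * a i) *: p i - y = t *: S + (t * a i) *: p i.
  by rewrite addrAC (addrC y) addrK.
apply: le_lt_trans (enormD _ _) _.
rewrite !enormZ !ger0_norm ?mulr_ge0 //; try exact: ltW.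
lra.
Qed.
End Conic.

Section Run.
Variables (R : realType) (n m : nat).
Notation vec := 'rV[R]_n.
Variables (f : vec -> \bar R) (g : 'I_m -> vec -> \bar R) (Gint : {set 'I_m}).
Hypothesis hf : forall x, f x != -oo%E.
Variables (rho0 theta_rho Delta0 theta_Delta beta : R)
  (x : nat -> vec) (Delta rho : nat -> R) (S D : nat -> seq vec).
Hypothesis hrun : MADS_PIP_run g Gint f rho0 theta_rho Delta0 theta_Delta beta x Delta rho S D.

Lemma c_ext_ge0 (y : vec) : (0 <= c_ext g Gint y)%E.
Proof.
by apply: sume_ge0 => l _; apply: mule_ge0; rewrite le_max lexx.
Qed.

Lemma merit_fin (y : vec) (r r' : R) : 0 < r -> 0 < r' ->
  (merit g Gint f y r < +oo)%E -> (merit g Gint f y r' < +oo)%E.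
Proof.
move=> hr hr'; rewrite /merit; case: ifP => // _.
have ce0 := c_ext_ge0 y.
move: ce0 (hf y); case: (c_ext g Gint y) => [s| |] //; case: (f y) => [t| |] //= _ _.
- by move=> _; rewrite -EFinM -!EFinD ltry.
- rewrite mulry gtr0_sg ?invr_gt0 // mul1e addey //.
- rewrite mulry gtr0_sg ?invr_gt0 // mul1e addey //.
Qed.


Lemma inv_run k : 0 < rho k /\ (merit g Gint f (x k) (rho k) < +oo)%E.
Proof.
case: hrun => [[_ hm0] [hr0 [ht0 ht1]] _ [_ [_ hrho0]] E].
elim: k => [|k [hr hm]]; first by rewrite hrho0.
have := E k; rewrite /= => -[_].
case: ifPn => [hS|hS].
  move=> [[s _ [hlt ->]] _ ->]; split=> //; exact: lt_le_trans hlt (leey _).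
move=> [_]; case: ifPn => [hP|hP].
  move=> [[d _ [hlt ->]] _ ->]; split=> //; exact: lt_le_trans hlt (leey _).
move=> [-> _ ->]; case: ifP => _.
  have hr' : 0 < theta_rho * rho k by exact: mulr_gt0.
  by split=> //; apply: (merit_fin hr hr').
by [].
Qed.


Lemma rho_step k : rho k.+1 = rho k \/ rho k.+1 = theta_rho * rho k.
Proof.
case: hrun => _ _ _ _ E.
have := E k; rewrite /= => -[_].
case: ifPn => [hS|hS]; first by move=> [_ _ ->]; left.
move=> [_]; case: ifPn => [hP|hP]; first by move=> [_ _ ->]; left.
by move=> [_ _ ->]; case: ifP => _; [right|left].
Qed.

Lemma kfacts k : rho k.+1 < rho k ->
  [/\ forall d, d \in D k -> [/\ d != 0, enorm d <= Delta k &
        ~ (merit g Gint f (x k + d) (rho k) < merit g Gint f (x k) (rho k))%E],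
      Delta k.+1 = theta_Delta * Delta k,
      Delta k.+1 <= rho k `^ beta &
      rho k.+1 = theta_rho * rho k].
Proof.
move=> hlt; case: hrun => _ _ _ _ E.
have := E k; rewrite /= => -[_].
case: ifPn => [hS|hS]; first by move=> [_ _ he]; move: hlt; rewrite he ltxx.
move=> [hD]; case: ifPn => [hP|hP]; first by move=> [_ _ he]; move: hlt; rewrite he ltxx.
move=> [_ hDe]; case: ifP => [hc|_]; last by move=> he; move: hlt; rewrite he ltxx.
move=> hre; split => //.
- move=> d hd; have [h1 _ h2] := hD d hd; split => // hl.
  by move/asboolPn: hP; apply; exists d.
- by move: hc; rewrite le_min => /andP[+ _]; rewrite lee_fin.
Qed.

End Run.
Lemma geom_small (R : realType) (th c eps : R) : 0 <= th < 1 -> 0 < eps -> exists j : nat, c * th ^+ j < eps.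
Proof.
move=> /andP[h0 h1] he.
have hc : `|th| < 1 by rewrite ger0_norm.
have := cvg_expr hc; move/cvgr0Pnorm_lt => /(_ (eps / (`|c| + 1))).
have hp : 0 < eps / (`|c| + 1) by apply: divr_gt0 => //; rewrite ltr_pwDr.
move=> /(_ hp) [N _ hN]; exists N.
have := hN N (leqnn N); rewrite /= => hl.
apply: le_lt_trans (ler_norm _) _; rewrite normrM.
have hq : (`|c| + 1) * (eps / (`|c| + 1)) = eps by rewrite mulrC divfK // gt_eqF // ltr_pwDr.
move: hl hq; set q := eps / _ => hl hq.
have := normr_ge0 c; have := normr_ge0 (th ^+ N); nra.
Qed.

Section Run2.
Variables (R : realType) (n m : nat).
Notation vec := 'rV[R]_n.
Variables (f : vec -> \bar R) (g : 'I_m -> vec -> \bar R) (Gint : {set 'I_m}).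
Hypothesis hf : forall x, f x != -oo%E.
Variables (rho0 theta_rho Delta0 theta_Delta beta : R)
  (x : nat -> vec) (Delta rho : nat -> R) (S D : nat -> seq vec).
Hypothesis hrun : MADS_PIP_run g Gint f rho0 theta_rho Delta0 theta_Delta beta x Delta rho S D.
Variable Kx : set nat.
Hypothesis hKsub : forall k, Kx k -> rho k.+1 < rho k.
Hypothesis hKinf : infinite_idx Kx.

Lemma rho_decr k : rho k.+1 <= rho k.
Proof.
have [hr _] := inv_run hf hrun k.
case: hrun => _ [_ [ht0 ht1]] _ _ _.
case: (rho_step hrun k) => ->; first by [].
by rewrite ger_pMl // ltW.
Qed.

Lemma rho_mono j d : rho (j + d)%N <= rho j.
Proof.
elim: d => [|d IH]; first by rewrite addn0.
by rewrite addnS; apply: le_trans (rho_decr _) IH.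
Qed.

Lemma rho_mono' j k : (j <= k)%N -> rho k <= rho j.
Proof. by move=> hjk; rewrite -(subnKC hjk); exact: rho_mono. Qed.

Lemma rho_geom j : exists N, forall k, (N <= k)%N -> rho k <= rho0 * theta_rho ^+ j.
Proof.
case: hrun => _ _ _ [_ [_ hrho0]] _.
elim: j => [|j [N hN]].
  by exists 0%N => k _; rewrite expr0 mulr1 -hrho0 (rho_mono' (leq0n k)).
have [k0 [hk0 Kk0]] := hKinf N.
have [_ _ _ hr] := kfacts hrun (hKsub Kk0).
exists k0.+1 => k hk.
apply: le_trans (rho_mono' hk) _.
rewrite hr exprS mulrCA ler_wpM2l //.
  by case: hrun => _ [_ [+ _]] _ _ _; move=> /ltW.
exact: hN.
Qed.

Lemma rho_to0 eps : 0 < eps -> exists N, forall k, (N <= k)%N -> rho k < eps.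
Proof.
move=> he.
have [th0 th1] : 0 < theta_rho /\ theta_rho < 1 by case: hrun => _ [_ [? ?]] _ _ _.
have [j hj] := @geom_small R theta_rho rho0 eps (ltac:(rewrite (ltW th0) th1 //)) he.
have [N hN] := rho_geom j.
by exists N => k hk; apply: le_lt_trans (hN k hk) hj.
Qed.

Lemma Delta_small eps : 0 < eps -> exists N, forall k, (N <= k)%N -> Kx k -> Delta k < eps.
Proof.
move=> he.
have [td0 [td1 _]] : 0 < theta_Delta /\ theta_Delta < 1 /\ True.
  by case: hrun => _ _ [_ [? [? _]]] _ _.
have hb : 1 < beta by case: hrun => _ _ _ [? _] _.
have hm : 0 < Num.min 1 (theta_Delta * eps) by rewrite lt_min ltr01 mulr_gt0.
have [N hN] := rho_to0 hm.
exists N => k hk Kk.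
have [_ hD hDb _] := kfacts hrun (hKsub Kk).
have [hr _] := inv_run hf hrun k.
have hrk := hN k hk; move: hrk; rewrite lt_min => /andP[r1 r2].
have : rho k `^ beta <= rho k by apply: ge1r_powR; [rewrite hr (ltW r1) | exact: ltW].
move: hDb; rewrite hD => h1 h2.
have : theta_Delta * Delta k < theta_Delta * eps by apply: le_lt_trans h1 _; apply: le_lt_trans h2 r2.
by rewrite ltr_pM2l.
Qed.

End Run2.

Section Aux.
Variables (R : realType) (n : nat).
Notation vec := 'rV[R]_n.

Lemma ereal_lt0_bound (z : \bar R) : (z < 0)%E -> exists2 s : R, s < 0 & (z <= s%:E)%E.
Proof.
case: z => [s| |] //.
- by rewrite lte_fin => hs; exists s.
- by move=> _; exists (-1); [lra | rewrite leNye].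
Qed.

Lemma clarke_neg (h : vec -> R) (y u : vec) : (clarke h y u < 0)%E ->
  exists2 e, 0 < e & exists2 sg, sg < 0 & forall y' t, inBall y e y' -> 0 < t -> t < e ->
    h (y' + t *: u) - h y' <= sg * t.
Proof.
move=> /ereal_inf_lt [_ [e he <-]] hlt.
have [sg hsg hle] := ereal_lt0_bound hlt.
exists e => //; exists sg => // y' t hy t0 te.
have : (((h (y' + t *: u) - h y') / t)%:E <= sg%:E)%E.
  apply: le_trans hle; apply: ereal_sup_ubound; exists y', t; split => //.
by rewrite lee_fin ler_pdivrMr.
Qed.

Lemma decr_of_clarke (h : vec -> R) (y u : vec) : (clarke h y u < 0)%E -> decr_at h y u.
Proof.
move=> /clarke_neg [e he [sg hsg H]]; exists e => // y' t hy /andP[t0 te].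
have := H y' t hy t0 te; have : sg * t < 0 by rewrite pmulr_llt0.
lra.
Qed.

Lemma sup_ge0_of (T : set (\bar R)) :
  (forall eps : R, 0 < eps -> exists2 r, T r & ((- eps)%:E <= r)%E) -> (0 <= ereal_sup T)%E.
Proof.
move=> H.
have H' : forall eps : R, 0 < eps -> ((- eps)%:E <= ereal_sup T)%E.
  move=> eps he; have [r Tr hr] := H eps he; apply: le_trans hr _; exact: ereal_sup_ubound.
case E : (ereal_sup T) => [s| |] //.
- rewrite lee_fin; rewrite leNgt; apply/negP => hs.
  have := H' (- s / 2) (ltac:(lra)); rewrite E lee_fin; lra.
- by have := H' 1 ltr01; rewrite E.
Qed.

Lemma ball_add (x y u : vec) (r1 r2 : R) : enorm (y - x) < r1 -> enorm u < r2 ->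
  enorm (y + u - x) < r1 + r2.
Proof.
move=> h1 h2; rewrite addrAC; apply: le_lt_trans (enormD _ _) _; exact: ltrD.
Qed.

Lemma fin_min (I : finType) (P : I -> R -> Prop) :
  (forall i, exists2 e, 0 < e & P i e) ->
  (forall i e e', 0 < e' -> e' <= e -> P i e -> P i e') ->
  exists2 e, 0 < e & forall i, P i e.
Proof.
move=> H Hm.
suff : forall s : seq I, exists2 e, 0 < e & forall i, i \in s -> P i e.
  by move=> /(_ (enum I)) [e he He]; exists e => // i; apply: He; rewrite mem_enum.
elim => [|j s [e he He]]; first by exists 1.
have [e' he' He'] := H j.
exists (Num.min e e'); first by rewrite lt_min he he'.
move=> i; rewrite in_cons => /orP[/eqP ->|hi].
- by apply: Hm He'; [rewrite lt_min he he'|rewrite ge_min lexx orbT].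
- by apply: Hm (He i hi); [rewrite lt_min he he'|rewrite ge_min lexx].
Qed.

Lemma decomp (d v : vec) (eps : R) : (0 < n)%N -> 0 < eps ->
  (forall i, `|v ord0 i| <= eps / n%:R) ->
  let a := fun i : 'I_n => (n%:R^-1 + v ord0 i / eps) / 2 in
  let b := fun i : 'I_n => (n%:R^-1 - v ord0 i / eps) / 2 in
  [/\ forall i, 0 <= a i, forall i, 0 <= b i &
   d + v = \sum_(i < n) (a i *: (d + eps *: delta_mx ord0 i) + b i *: (d - eps *: delta_mx ord0 i))].
Proof.
move=> hn he hv a b.
have hn' : (0 : R) < n%:R by rewrite ltr0n.
have key : forall i, - (n%:R^-1) <= v ord0 i / eps <= n%:R^-1.
  move=> i; have := hv i; rewrite ler_norml => /andP[h1 h2].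
  rewrite ler_pdivlMr // ler_pdivrMr // mulNr (mulrC (n%:R^-1)).
  by apply/andP; split; lra.
split.
- move=> i; have /andP[k1 _] := key i; rewrite /a; apply: divr_ge0 => //; lra.
- move=> i; have /andP[_ k2] := key i; rewrite /b; apply: divr_ge0 => //; lra.
have -> : \sum_(i < n) (a i *: (d + eps *: delta_mx ord0 i) + b i *: (d - eps *: delta_mx ord0 i))
  = \sum_(i < n) (n%:R^-1 *: d + v ord0 i *: delta_mx ord0 i).
  apply: eq_bigr => i _.
  rewrite !scalerDr !scalerN !scalerA.
  have -> : a i * eps = (eps / n%:R + v ord0 i) / 2.
    by rewrite /a; field; rewrite !gt_eqF.
  have -> : b i * eps = (eps / n%:R - v ord0 i) / 2 by rewrite /b; field; rewrite !gt_eqF.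
  have -> : n%:R^-1 *: d = a i *: d + b i *: d by rewrite -scalerDl /a /b; congr (_ *: _); field; rewrite !gt_eqF.
  have -> : v ord0 i *: (delta_mx ord0 i : vec) = ((eps / n%:R + v ord0 i) / 2) *: delta_mx ord0 i - ((eps / n%:R - v ord0 i) / 2) *: delta_mx ord0 i.
    by rewrite -scalerBl; congr (_ *: _); field; rewrite !gt_eqF.
  by move: (a i *: d) (b i *: d) (((eps / n%:R + v ord0 i) / 2) *: (delta_mx ord0 i : vec)) (((eps / n%:R - v ord0 i) / 2) *: (delta_mx ord0 i : vec)) => A B C E; rewrite addrACA.
rewrite big_split /= sumr_const card_ord -scaler_nat scalerA mulfV ?gt_eqF // scale1r.
by rewrite -row_sum_delta.
Qed.

End Aux.

Section Merit.
Variables (R : realType) (n m : nat).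
Notation vec := 'rV[R]_n.
Variables (f : vec -> \bar R) (g : 'I_m -> vec -> \bar R) (Gint : {set 'I_m}).

Lemma cext_in (y : vec) : in_Omega_ext g Gint y -> c_ext g Gint y = 0%E.
Proof.
move=> hy; rewrite /c_ext big1 // => l hl.
by rewrite maxEge (hy l hl) mule0.
Qed.

Lemma merit_cmp (y1 y2 : vec) (r : R) : 0 < r ->
  (c_int g Gint y1 < 0)%E -> c_int g Gint y1 \is a fin_num ->
  f y1 \is a fin_num -> c_ext g Gint y1 \is a fin_num ->
  c_int g Gint y2 \is a fin_num -> f y2 \is a fin_num -> c_ext g Gint y2 \is a fin_num ->
  fine (c_int g Gint y2) <= fine (c_int g Gint y1) ->
  fine (c_ext g Gint y2) <= fine (c_ext g Gint y1) ->
  ~ (merit g Gint f y2 r < merit g Gint f y1 r)%E ->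
  fine (f y1) <= fine (f y2).
Proof.
move=> hr hc1 hc1f hf1 he1 hc2 hf2 he2 hci hce hm.
have ex : forall z : \bar R, z \is a fin_num -> exists Z : R, z = Z%:E.
  by move=> z hz; exists (fine z); rewrite fineK.
have [A1 eA1] := ex _ hc1f; have [A2 eA2] := ex _ hc2.
have [F1 eF1] := ex _ hf1; have [F2 eF2] := ex _ hf2.
have [E1 eE1] := ex _ he1; have [E2 eE2] := ex _ he2.
move: hc1 hci hce hm; rewrite /merit eA1 eA2 eF1 eF2 eE1 eE2 /= !lte_fin => hc1 hci hce.
have hc2' : A2 < 0 by lra.
rewrite hc1 hc2' -!EFinM -!EFinD lte_fin => /negP; rewrite -leNgt => hm.
have hl : ln (- A1) <= ln (- A2).
  by rewrite ler_ln; [lra | rewrite posrE; lra | rewrite posrE; lra].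
have hrl : r * ln (- A1) <= r * ln (- A2) by rewrite ler_pM2l.
have hri : r^-1 * E2 <= r^-1 * E1.
  by rewrite ler_pM2l // invr_gt0.
lra.
Qed.

Lemma hyper_open (xb d : vec) : hypertangent g Gint xb d ->
  exists2 eh, 0 < eh & forall w, enorm (w - d) < eh -> hypertangent g Gint xb w.
Proof.
move=> [e [he H]]; exists (e / 2); first by rewrite divr_gt0.
move=> w hw; exists (e / 2); split; first by rewrite divr_gt0.
move=> y w' t hO hy hw' t0 te; apply: H => //.
- by rewrite /inBall in hy *; lra.
- rewrite /inBall in hw' *.
  have -> : w' - d = (w' - w) + (w - d) by rewrite addrA subrK.
  apply: le_lt_trans (enormD _ _) _; lra.
- lra.
Qed.

Lemma cext_seg (xb y0 W : vec) (s rad L : R) (p q : 'I_n -> vec) (a b : 'I_n -> R) :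
  0 < s ->
  (forall tau, 0 <= tau <= s -> inBall xb rad (y0 + tau *: W)) ->
  (forall y w, inBall xb rad y -> inBall xb rad w ->
     `|fine (c_ext g Gint y) - fine (c_ext g Gint w)| <= L * enorm (y - w)) ->
  (forall y, inBall xb rad y -> c_ext g Gint y \is a fin_num) ->
  (forall y, inBall xb rad y -> ~ in_Omega_ext g Gint y -> forall i,
     (clarkeE (c_ext g Gint) y (p i) < 0)%E /\ (clarkeE (c_ext g Gint) y (q i) < 0)%E) ->
  (forall i, 0 <= a i) -> (forall i, 0 <= b i) ->
  W = \sum_(i < n) (a i *: p i + b i *: q i) ->
  fine (c_ext g Gint (y0 + s *: W)) <= fine (c_ext g Gint y0).
Proof.
move=> hs hball hL hfin hscq ha hb hW.
pose h := fun y => fine (c_ext g Gint y).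
pose phi := fun tau => h (y0 + tau *: W).
have hK : 0 < `|L| * enorm W + 1 by have := enorm_ge0 W; have := normr_ge0 L; nra.
have := @segment_nonincr R phi s (`|L| * enorm W + 1) hs hK.
rewrite /phi /h scale0r addr0; apply.
- by apply: fine_ge0; exact: c_ext_ge0.
- move=> a' b' ha' hb'.
  apply: le_trans (hL _ _ (hball _ ha') (hball _ hb')) _.
  have -> : y0 + a' *: W - (y0 + b' *: W) = (a' - b') *: W.
    by rewrite opprD addrACA subrr add0r scalerBl.
  rewrite enormZ.
  have hx : 0 <= `|a' - b'| * enorm W by apply: mulr_ge0 => //; exact: enorm_ge0.
  have h1 : L * (`|a' - b'| * enorm W) <= `|L| * (`|a' - b'| * enorm W).
    by apply: ler_wpM2r => //; exact: ler_norm.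
  have -> : (`|L| * enorm W + 1) * `|a' - b'| = `|L| * (`|a' - b'| * enorm W) + `|a' - b'| by ring.
  have := normr_ge0 (a' - b'); lra.
- move=> tau /andP[t0 t1] hpos.
  set y := y0 + tau *: W.
  have hyb : inBall xb rad y by apply: hball; rewrite t0 ltW.
  have hnot : ~ in_Omega_ext g Gint y.
    move=> hin; move: hpos; rewrite /h (cext_in hin) /=; lra.
  have hdp : forall i, decr_at h y (p i).
    by move=> i; apply: decr_of_clarke; have [] := hscq y hyb hnot i.
  have hdq : forall i, decr_at h y (q i).
    by move=> i; apply: decr_of_clarke; have [] := hscq y hyb hnot i.
  have [eta heta Hc] := conic (index_enum 'I_n) ha hb hdp hdq.
  exists eta => // t ht.
  have -> : y0 + (tau + t) *: W = y + t *: W by rewrite scalerDl addrA.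
  by rewrite hW; apply: Hc.
Qed.

End Merit.
Unset Implicit Arguments.
Theorem mainTheorem8 (R : realType) (n m : nat)
  (f : 'rV[R]_n -> \bar R) (g : 'I_m -> 'rV[R]_n -> \bar R) (Gint : {set 'I_m})
  (* f, g_l take values in R \cup {+oo} *)
  (hf : forall x, f x != -oo%E) (hg : forall l x, g l x != -oo%E)
  (* Assumption 1: bounded level sets of f *)
  (A1 : forall alpha : R, exists M : R,
          forall x, (f x <= alpha%:E)%E -> enorm x <= M)
  (rho0 theta_rho Delta0 theta_Delta beta : R)
  (x : nat -> 'rV[R]_n) (Delta rho : nat -> R) (S D : nat -> seq 'rV[R]_n)
  (hrun : MADS_PIP_run g Gint f rho0 theta_rho Delta0 theta_Delta beta
            x Delta rho S D)
  (Kx : set nat) (xbar : 'rV[R]_n)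
  (* K^x_rho is an infinite subset of K_rho = {k : rho_{k+1} < rho_k} *)
  (hKsub : forall k, Kx k -> rho k.+1 < rho k)
  (hKinf : infinite_idx Kx)
  (hKlim : lim_along Kx x xbar)
  (hflip : lipschitz_near f xbar)
  (hdense : dense_in_sphere Kx D)
  (hOmega : in_Omega g Gint xbar)
  (hSCQ : SCQ g Gint xbar) :
  forall d : 'rV[R]_n, hypertangent g Gint xbar d ->
    (0 <= clarkeE f xbar d)%E.
Proof.
move=> d hH.
have enorm0 : enorm (0 : 'rV[R]_n) = 0.
  by rewrite -(scale0r (0 : 'rV[R]_n)) enormZ normr0 mul0r.
rewrite /clarkeE /clarke; apply: le_ereal_inf_tmp => _ [e /= he <-].
apply: sup_ge0_of => eps heps.
have [->|dn0] := eqVneq d 0.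
  exists 0%:E; last by rewrite lee_fin oppr_le0 ltW.
  exists xbar, (e / 2); split.
  - by rewrite /inBall subrr enorm0.
  - by rewrite divr_gt0.
  - lra.
  - by rewrite scaler0 addr0 subrr mul0r.
have nd0 : 0 < enorm d.
  rewrite lt_neqAle enorm_ge0 andbT eq_sym; apply/eqP => h0.
  by move: dn0; rewrite (enorm_eq0 h0) eqxx.
have hn : (0 < n)%N.
  rewrite lt0n; apply/eqP => n0; move/eqP: dn0; apply; apply/rowP => i.
  by case: i => j hj; exfalso; move: hj; rewrite n0.
case: hflip => ef [hef [Lf [finf lipf]]].
case: hSCQ => [[[ei [hei [Li [fini lipi]]]] [ee [hee [Le [finE lipe]]]]] hb hc].
have [e1 he1 [sg hsg Hci]] := clarke_neg (hb d hH).
have [eh heh Hopen] := hyper_open hH.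
pose ep := eh / 2.
have hep : 0 < ep by rewrite divr_gt0.
pose p := fun i : 'I_n => d + ep *: (delta_mx ord0 i : 'rV[R]_n).
pose q := fun i : 'I_n => d - ep *: (delta_mx ord0 i : 'rV[R]_n).
have hp : forall i, hypertangent g Gint xbar (p i).
  move=> i; apply: Hopen; rewrite /p addrAC subrr add0r enormZ enorm_delta mulr1 gtr0_norm //.
  by rewrite /ep; lra.
have hq : forall i, hypertangent g Gint xbar (q i).
  move=> i; apply: Hopen; rewrite /q addrAC subrr add0r enormN enormZ enorm_delta mulr1 gtr0_norm //.
  by rewrite /ep; lra.
have [ec hec Hc] : exists2 ec, 0 < ec & forall i y, inBall xbar ec y -> ~ in_Omega_ext g Gint y ->
     (clarkeE (c_ext g Gint) y (p i) < 0)%E /\ (clarkeE (c_ext g Gint) y (q i) < 0)%E.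
  apply: (@fin_min R 'I_n (fun i r => forall y, inBall xbar r y -> ~ in_Omega_ext g Gint y ->
     (clarkeE (c_ext g Gint) y (p i) < 0)%E /\ (clarkeE (c_ext g Gint) y (q i) < 0)%E)); last first.
    by move=> i r r' _ hle H y hy; apply: H; exact: lt_le_trans hy hle.
  move=> i.
  have [e2 [he2 H2]] := hc (p i) (hp i); have [e3 [he3 H3]] := hc (q i) (hq i).
  exists (Num.min e2 e3); first by rewrite lt_min he2 he3.
  move=> y hy hy'; split.
  - by apply: H2 hy'; apply: lt_le_trans hy _; rewrite ge_min lexx.
  - by apply: H3 hy'; apply: lt_le_trans hy _; rewrite ge_min lexx orbT.
pose mn := Num.min ef (Num.min e1 (Num.min ei (Num.min ee (Num.min ec e)))).
have hmn : 0 < mn by rewrite /mn !lt_min hef he1 hei hee hec he.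
have mnf : mn <= ef by rewrite /mn !ge_min lexx ?orbT.
have mn1 : mn <= e1 by rewrite /mn !ge_min lexx ?orbT.
have mni : mn <= ei by rewrite /mn !ge_min lexx ?orbT.
have mne : mn <= ee by rewrite /mn !ge_min lexx ?orbT.
have mnc : mn <= ec by rewrite /mn !ge_min lexx ?orbT.
have mnE : mn <= e by rewrite /mn !ge_min lexx ?orbT.
pose r1 := mn / 2.
have hr1 : 0 < r1 by rewrite divr_gt0.
pose Abd := Num.min r1 (enorm d * r1).
have hAbd : 0 < Abd by rewrite lt_min hr1 mulr_gt0.
pose BW := Num.min (- sg / (`|Li| + 1)) (Num.min (ep / n%:R) (eps / (`|Lf| + 1))).
have hLi1 : 0 < `|Li| + 1 by have := normr_ge0 Li; lra.
have hLf1 : 0 < `|Lf| + 1 by have := normr_ge0 Lf; lra.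
have hn' : (0 : R) < n%:R by rewrite ltr0n.
have hBW : 0 < BW.
  rewrite /BW !lt_min !divr_gt0 //; lra.
have BW1 : BW <= - sg / (`|Li| + 1) by rewrite /BW !ge_min lexx ?orbT.
have BW2 : BW <= ep / n%:R by rewrite /BW !ge_min lexx ?orbT.
have BW3 : BW <= eps / (`|Lf| + 1) by rewrite /BW !ge_min lexx ?orbT.
have [N1 hN1] := hKlim r1 hr1.
have [N2 hN2] := Delta_small hf hrun hKsub hKinf hAbd.
have hdb : enorm ((enorm d)^-1 *: d) = 1.
  by rewrite enormZ gtr0_norm ?invr_gt0 // mulVf // gt_eqF.
have [Kd [hKd [hKdinf [dk [hdk hlimd]]]]] := hdense _ hdb.
have [N3 hN3] := hlimd (BW / enorm d) (divr_gt0 hBW nd0).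
have [k [hk Kdk]] := hKdinf (N1 + N2 + N3)%N.
have Kxk := hKd k Kdk.
have hk1 : (N1 <= k)%N := leq_trans (leq_addr N2 N1) (leq_trans (leq_addr N3 _) hk).
have hk2 : (N2 <= k)%N := leq_trans (leq_addl N1 N2) (leq_trans (leq_addr N3 _) hk).
have hk3 : (N3 <= k)%N := leq_trans (leq_addl (N1 + N2) N3) hk.
have [hD _ _ _] := kfacts hrun (hKsub k Kxk).
have [dk0 hdkD hnm] := hD (dk k) (hdk k Kdk).
have [hrk hmk] := inv_run hf hrun k.
have hci0 : (c_int g Gint (x k) < 0)%E.
  by move: hmk; rewrite /merit; case: ifP.
set y0 := x k; set dd := dk k.
pose nd := enorm d.
have ha : 0 < enorm dd.
  rewrite lt_neqAle enorm_ge0 andbT eq_sym; apply/eqP => h0.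
  by move/eqP: dk0; apply; exact: enorm_eq0 h0.
pose a := enorm dd.
pose s := a / nd.
pose W := (nd / a) *: dd.
have hs : 0 < s by rewrite divr_gt0.
have eqW : y0 + dd = y0 + s *: W.
  by rewrite /W scalerA /s (_ : a / nd * (nd / a) = 1) ?scale1r //; field; rewrite !gt_eqF.
have snd : s * nd = a by rewrite /s; field; rewrite gt_eqF.
have nW : enorm W = nd.
  by rewrite /W enormZ gtr0_norm ?divr_gt0 // -/a; field; rewrite gt_eqF.
have hWd : enorm (W - d) < BW.
  have -> : W - d = nd *: ((enorm dd)^-1 *: dd - (enorm d)^-1 *: d).
    by rewrite scalerBr !scalerA /W -/a -/nd mulfV ?gt_eqF // scale1r.
  rewrite enormZ gtr0_norm //.
  have := hN3 k hk3 Kdk; rewrite -/nd => h.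
  have : nd * enorm ((enorm dd)^-1 *: dd - nd^-1 *: d) < nd * (BW / nd) by rewrite ltr_pM2l.
  by rewrite (mulrC nd (BW / nd)) divfK // gt_eqF.
pose ew := enorm (W - d).
have ew0 : 0 <= ew by exact: enorm_ge0.
have haD : a <= Delta k := hdkD.
have hDk : Delta k < Abd := hN2 k hk2 Kxk.
have Ab1 : Abd <= r1 by rewrite /Abd ge_min lexx.
have Ab2 : Abd <= nd * r1 by rewrite /Abd ge_min lexx orbT.
have hx0 : enorm (y0 - xbar) < r1 := hN1 k hk1 Kxk.
have mnr : r1 + r1 = mn by rewrite /r1; field.
have hball : forall u, enorm u <= a -> inBall xbar mn (y0 + u).
  move=> u hu; rewrite /inBall -mnr; apply: ball_add => //; lra.
have hy0 : inBall xbar mn y0.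
  by rewrite -(addr0 y0); apply: hball; rewrite enorm0; exact: ltW.
have hsr : s < r1.
  have : a < nd * r1 by lra.
  by rewrite /s ltr_pdivrMr // mulrC.
have hPd : inBall xbar mn (y0 + s *: d).
  by apply: hball; rewrite enormZ (gtr0_norm hs) -/nd snd.
have hPW : inBall xbar mn (y0 + s *: W).
  by apply: hball; rewrite enormZ (gtr0_norm hs) nW snd.
have ball_le : forall r y, mn <= r -> inBall xbar mn y -> inBall xbar r y.
  by move=> r y hr hy; exact: lt_le_trans hy hr.
have hI1 := Hci y0 s (ball_le _ _ mn1 hy0) hs (ltac:(lra)).
have hI2 := lipi (y0 + s *: W) (y0 + s *: d) (ball_le _ _ mni hPW) (ball_le _ _ mni hPd).
have e2 : y0 + s *: W - (y0 + s *: d) = s *: (W - d).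
  by rewrite opprD addrACA subrr add0r scalerBr.
rewrite e2 enormZ (gtr0_norm hs) -/ew in hI2.
have hLi : Li * ew <= - sg.
  have h1 : Li * ew <= `|Li| * ew by apply: ler_wpM2r => //; exact: ler_norm.
  have h2 : (`|Li| + 1) * ew <= (`|Li| + 1) * (- sg / (`|Li| + 1)).
    by apply: ler_wpM2l; [exact: ltW | apply: le_trans BW1; exact: ltW].
  have hqq : (`|Li| + 1) * (- sg / (`|Li| + 1)) = - sg by rewrite mulrC divfK // gt_eqF.
  rewrite hqq mulrDl mul1r in h2; lra.
have hLis : Li * (s * ew) <= s * - sg.
  by rewrite mulrCA; apply: ler_wpM2l => //; exact: ltW.
have stepI : fine (c_int g Gint (y0 + s *: W)) <= fine (c_int g Gint y0).
  move: hI2; rewrite ler_norml => /andP[_ h3].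
  have : sg * s = - (s * - sg) by ring.
  lra.
have hcoord : forall i, `|(W - d) ord0 i| <= ep / n%:R.
  move=> i; apply: le_trans (coord_le _ _) _; apply: le_trans BW2; exact: ltW.
have [ha' hb' hdec] := decomp d hn hep hcoord.
have hW : W = \sum_(i < n) (((n%:R^-1 + (W - d) ord0 i / ep) / 2) *: p i +
                             ((n%:R^-1 - (W - d) ord0 i / ep) / 2) *: q i).
  by rewrite -hdec addrC subrK.
have hballW : forall tau, 0 <= tau <= s -> inBall xbar mn (y0 + tau *: W).
  move=> tau /andP[t0 t1]; apply: hball; rewrite enormZ (ger0_norm t0) nW -snd.
  by apply: ler_wpM2r => //; exact: enorm_ge0.
have stepII : fine (c_ext g Gint (y0 + s *: W)) <= fine (c_ext g Gint y0).
  apply: (@cext_seg R n m g Gint xbar y0 W s mn Le p q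
    (fun i => (n%:R^-1 + (W - d) ord0 i / ep) / 2) (fun i => (n%:R^-1 - (W - d) ord0 i / ep) / 2)
    hs hballW _ _ _ ha' hb' hW).
  - by move=> y w hy hw; apply: lipe; apply: ball_le.
  - by move=> y hy; apply: finE; apply: ball_le.
  - by move=> y hy hO i; apply: Hc => //; apply: ball_le.
have hnm' : ~ (merit g Gint f (y0 + s *: W) (rho k) < merit g Gint f y0 (rho k))%E.
  by rewrite -eqW.
have stepIII : fine (f y0) <= fine (f (y0 + s *: W)).
  apply: (merit_cmp hrk hci0) => //.
  - by apply: fini; apply: ball_le.
  - by apply: finf; apply: ball_le.
  - by apply: finE; apply: ball_le.
  - by apply: fini; apply: ball_le.
  - by apply: finf; apply: ball_le.
  - by apply: finE; apply: ball_le.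
exists (((fine (f (y0 + s *: d)) - fine (f y0)) / s)%:E).
  exists y0, s; split => //.
  - exact: ball_le.
  - lra.
rewrite lee_fin ler_pdivlMr //.
have hF := lipf (y0 + s *: d) (y0 + s *: W) (ball_le _ _ mnf hPd) (ball_le _ _ mnf hPW).
have e3 : y0 + s *: d - (y0 + s *: W) = s *: (d - W).
  by rewrite opprD addrACA subrr add0r scalerBr.
rewrite e3 enormZ (gtr0_norm hs) enormB -/ew in hF.
have hLf : `|Lf| * ew <= eps.
  have h2 : (`|Lf| + 1) * ew <= (`|Lf| + 1) * (eps / (`|Lf| + 1)).
    by apply: ler_wpM2l; [exact: ltW | apply: le_trans BW3; exact: ltW].
  have hqq : (`|Lf| + 1) * (eps / (`|Lf| + 1)) = eps by rewrite mulrC divfK // gt_eqF.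
  rewrite hqq mulrDl mul1r in h2; lra.
have h1 : Lf * (s * ew) <= s * eps.
  rewrite mulrCA; apply: ler_wpM2l; first exact: ltW.
  apply: le_trans hLf; apply: ler_wpM2r => //; exact: ler_norm.
move: hF; rewrite ler_norml => /andP[h4 _].
lra.
Qed.
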